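(* Let $M(t)\in\mathbb{R}^{n\times n}$ be symmetric and satisfy $\dot M=-(M\Phi+\Phi M)$ with $\Phi(t)$ symmetric, and suppose $M(t)=\sum_e\lambda_e(t)E_e(t)$ with distinct eigenvalues $\lambda_e(t)$ and orthogonal spectral projectors $E_e(t)$ varying differentiably (ranks constant). Then for each $e$, $$\dot\lambda_e=-2\lambda_e\,\frac{\operatorname{tr}(E_e\Phi E_e)}{\dim(E_e)},$$ where $\dim(E_e)=\operatorname{tr}(E_e)$ is the rank of $E_e$. *)

(* Defs.v *)
From HB Require Import structures.
From mathcomp Require Export all_boot all_order all_algebra.
From mathcomp Require Export all_classical all_reals all_analysis.
Export Order.TTheory GRing.Theory Num.Theory.

(* Main.v *)
Require Import Defs.
From mathcomp Require Import ring.
Local Open Scope ring_scope.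

Lemma tr_pid (F : fieldType) n r : (r <= n)%N -> \tr (pid_mx r : 'M[F]_n) = r%:R.
Proof.
move=> rn; rewrite /mxtrace.
rewrite (eq_bigr (fun i : 'I_n => ((i < r)%N : nat)%:R)); last first.
  by move=> i _; rewrite mxE eqxx /=; case: (i < r)%N.
rewrite -natr_sum; congr (_%:R).
rewrite -(big_mkord xpredT (fun i => nat_of_bool (i < r)%N)).
rewrite (big_cat_nat _ (n:=r)) //= [X in (_ + X)%N]big_nat_cond [X in (_ + X)%N]big1; last first.
  by move=> i /andP[/andP[ri _] _]; rewrite ltnNge ri.
rewrite addn0 big_nat_cond (eq_bigr (fun _ => 1%N)); last first.
  by move=> i /andP[/andP[_ ->] _].
by rewrite -big_nat_cond sum_nat_const_nat subn0 muln1.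
Qed.

Lemma tr_idem (F : fieldType) n (A : 'M[F]_n) : A *m A = A -> \tr A = (\rank A)%:R.
Proof.
move=> AA.
have eA := mulmx_ebase A.
set L := col_ebase A in eA; set U := row_ebase A in eA; set P := pid_mx (\rank A) in eA.
have PP : P *m P = P by rewrite pid_mx_id // rank_leq_row.
have key : P *m (U *m L) *m P = P.
  have : L *m (P *m (U *m L) *m P) *m U = L *m P *m U.
    by rewrite eA -AA -eA !mulmxA.
  move=> h.
  have := congr1 (fun X => invmx L *m (X *m invmx U)) h.
  by rewrite /= !mulmxK ?row_ebase_unit // !mulKmx ?col_ebase_unit.
have -> : \tr A = \tr (P *m (U *m L) *m P).
  rewrite -[in LHS]eA -mulmxA mxtrace_mulC.
  by rewrite [RHS]mxtrace_mulC mulmxA PP mulmxA.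
by rewrite key tr_pid // rank_leq_row.
Qed.

Lemma is_derive_mxmul (R : realType) n (A B : R -> 'M[R]_n) (t : R) (dA dB : 'M[R]_n) :
  (forall i j, is_derive t (1:R) (fun s => A s i j) (dA i j)) ->
  (forall i j, is_derive t (1:R) (fun s => B s i j) (dB i j)) ->
  forall i j, is_derive t (1:R) (fun s => (A s *m B s) i j) ((dA *m B t + A t *m dB) i j).
Proof.
move=> hA hB i j.
have -> : (fun s => (A s *m B s) i j) =
    \sum_(l < n) ((fun s => A s i l) * (fun s => B s l j)).
  by apply/funext => s; rewrite fct_sumE mxE.
apply: is_derive_eq.
rewrite !mxE -big_split /=; apply: eq_bigr => l _.
by rewrite /GRing.scale /= addrC [dA i l * _]mulrC.
Qed.

Lemma is_derive_tr (R : realType) n (A : R -> 'M[R]_n)(t : R) (dA : 'M[R]_n) :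
  (forall i j, is_derive t (1:R) (fun s => A s i j) (dA i j)) ->
  is_derive t (1:R) (fun s => \tr (A s)) (\tr dA).
Proof.
move=> hA.
have -> : (fun s => \tr (A s)) = \sum_(l < n) (fun s => A s l l).
  by apply/funext => s; rewrite fct_sumE.
by apply: is_derive_sum => l; exact: hA.
Qed.

Theorem corollary8 (R : realType) (n k : nat)
  (M Phi : R -> 'M[R]_n) (lam : 'I_k -> R -> R) (E : 'I_k -> R -> 'M[R]_n) :
  (forall t, (M t)^T = M t) ->
  (forall t, (Phi t)^T = Phi t) ->
  (forall t (i j : 'I_n), derivable (fun s => M s i j) t 1) ->
  (forall t (i j : 'I_n),
      derive1 (fun s => M s i j) t = (- (M t *m Phi t + Phi t *m M t)) i j) ->
  (* spectral decomposition with distinct eigenvalues *)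
  (forall t, M t = \sum_(e < k) lam e t *: E e t) ->
  (forall t (e f : 'I_k), e != f -> lam e t != lam f t) ->
  (* orthogonal spectral projectors (nonzero, resolving the identity) *)
  (forall t e, (E e t)^T = E e t) ->
  (forall t e, E e t *m E e t = E e t) ->
  (forall t (e f : 'I_k), e != f -> E e t *m E f t = 0) ->
  (forall t, \sum_(e < k) E e t = 1%:M) ->
  (forall t e, E e t != 0) ->
  (* projectors vary differentiably, with constant ranks *)
  (forall e t (i j : 'I_n), derivable (fun s => E e s i j) t 1) ->
  (forall e t s, \rank (E e t) = \rank (E e s)) ->
  forall (e : 'I_k) (t : R),
    derivable (lam e) t 1 /\
    derive1 (lam e) t = - 2 * lam e t * (\tr (E e t *m Phi t *m E e t) / (\rank (E e t))%:R).
Proof.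
move=> _ _ hMd hMeq hM _ _ hEE hEF _ hE0 hEd hrk e t.
set r := \rank (E e t).
have rs : forall s, \rank (E e s) = r by move=> s; rewrite /r (hrk e s t).
have r0 : (r%:R : R) != 0.
  by rewrite pnatr_eq0 /r mxrank_eq0 hE0.
have EM : forall s, E e s *m M s = lam e s *: E e s.
  move=> s; rewrite hM mulmx_sumr (bigD1 e) //= big1 ?addr0.
    by rewrite -scalemxAr hEE.
  by move=> f fe; rewrite -scalemxAr hEF ?scaler0 // eq_sym.
have ME : forall s, M s *m E e s = lam e s *: E e s.
  move=> s; rewrite hM mulmx_suml (bigD1 e) //= big1 ?addr0.
    by rewrite -scalemxAl hEE.
  by move=> f fe; rewrite -scalemxAl hEF ?scaler0.
have lamE : lam e = (r%:R^-1) \*: (fun s => \tr (E e s *m M s)).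
  apply/funext => s /=; rewrite EM mxtraceZ tr_idem ?hEE // rs.
  by rewrite /GRing.scale /= mulrC mulfK.
set dE := \matrix_(i, j) 'D_1 (fun s => E e s i j) t.
set dM := - (M t *m Phi t + Phi t *m M t).
have hEd' : forall i j, is_derive t (1:R) (fun s => E e s i j) (dE i j).
  by move=> i j; rewrite mxE; apply: derivableP; exact: hEd.
have hMd' : forall i j, is_derive t (1:R) (fun s => M s i j) (dM i j).
  by move=> i j; apply: DeriveDef; [exact: hMd | rewrite -derive1E hMeq].
have hlam : is_derive t (1:R) (lam e)
    (r%:R^-1 *: \tr (dE *m M t + E e t *m dM)).
  rewrite lamE; apply: is_deriveZ; apply: is_derive_tr.
  exact: is_derive_mxmul.
have dEE : dE = dE *m E e t + E e t *m dE.
  apply/matrixP => i j.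
  have h1 := @is_derive_mxmul _ _ _ _ _ _ _ hEd' hEd' i j.
  have h2 : (fun s => (E e s *m E e s) i j) = (fun s => E e s i j).
    by apply/funext => s; rewrite hEE.
  rewrite h2 in h1.
  by rewrite -(@derive_val _ _ _ _ _ _ _ h1) -(@derive_val _ _ _ _ _ _ _ (hEd' i j)).
set Et := E e t.
have EdE : Et *m dE *m Et = 0.
  have h : Et *m dE *m Et = Et *m dE *m Et + Et *m dE *m Et.
    rewrite {1}dEE mulmxDr mulmxDl !mulmxA /Et hEE -!mulmxA hEE.
    by rewrite !mulmxA.
  by apply/eqP; rewrite -(addrI _ (esym (etrans (addr0 _) h))).
have EEt : Et *m Et = Et by exact: hEE.
have trdE : \tr (dE *m Et) = 0.
  by rewrite -{1}EEt mulmxA mxtrace_mulC mulmxA EdE mxtrace0.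
have EMt : Et *m M t = lam e t *: Et := EM t.
have MEt : M t *m Et = lam e t *: Et := ME t.
have t1 : \tr (dE *m M t) = 0.
  have a1 : \tr (dE *m Et *m M t) = lam e t * \tr (dE *m Et).
    by rewrite -mulmxA EMt -scalemxAr mxtraceZ.
  have a2 : \tr (Et *m dE *m M t) = lam e t * \tr (dE *m Et).
    by rewrite -mulmxA mxtrace_mulC -mulmxA MEt -scalemxAr mxtraceZ.
  by rewrite dEE mulmxDl mxtraceD a1 a2 trdE !mulr0 addr0.
have t2 : \tr (Et *m dM) = - 2 * lam e t * \tr (Et *m Phi t *m Et).
  have b1 : \tr (Et *m (M t *m Phi t)) = lam e t * \tr (Et *m Phi t).
    by rewrite mulmxA EMt -scalemxAl mxtraceZ.
  have b2 : \tr (Et *m (Phi t *m M t)) = lam e t * \tr (Et *m Phi t).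
    by rewrite mxtrace_mulC -mulmxA MEt -scalemxAr mxtraceZ mxtrace_mulC.
  have b3 : \tr (Et *m Phi t *m Et) = \tr (Et *m Phi t).
    by rewrite mxtrace_mulC mulmxA EEt.
  rewrite /dM mulmxN raddfN /= mulmxDr mxtraceD b1 b2 b3.
  ring.
split; first exact: ex_derive.
rewrite derive1E (@derive_val _ _ _ _ _ _ _ hlam) mxtraceD t1 add0r t2.
by rewrite /GRing.scale /= /r mulrC -!mulrA.
Qed.
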